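(* Let $G'$ be a context-free grammar with start symbol $s$, no $\varepsilon$-rules and no useless nonterminal. Then there exists a prefix $\ell$ of $G'$ such that the explanation graph $\mathrm{Expl}(G_\ell)$ (defined in the context) is cyclic if and only if the left-corner relation of $G'$ is cyclic.
   Context: Grammar: $G'$ has finite terminal set $\Sigma$, finite nonterminal set $N$, start symbol $s\in N$; every rule $A\to\alpha$ has $\alpha\in(N\cup\Sigma)^+$; a rule is useless if it occurs in no derivation of a terminal string from $s$, and a nonterminal is useless if all its rules are useless. Nonterminals $X,Y$ are in the direct left-corner relation if there is a rule $X\to Y\beta$; the left-corner relation $\to_L$ is its transitive closure; it is cyclic if $X\to_L X$ for some nonterminal $X$. A prefix is a nonempty string $\ell\in\Sigma^+$ that is an initial segment of some terminal string derivable from $s$. Explanation graph. For a prefix $\ell$ consider ground atoms $q(\ell)$, $p(\beta,u,v)$ with $\beta\in(N\cup\Sigma)^*$, $u,v\in\Sigma^*$, and switch atoms $m(A\to\alpha)$ for rules of $G'$. Consider all ground clauses: (C0) $q(\ell)\leftarrow p(s,\ell,\varepsilon)$; (C1) $p(\varepsilon,u,u)\leftarrow$ (empty body), for all $u$; (C2) for $a\in\Sigma$: $p(a\beta,a,\varepsilon)\leftarrow$ (empty body); and $p(a\beta,av,w)\leftarrow p(\beta,v,w)$ whenever $v\neq\varepsilon$; (C3) for $A\in N$ and each rule $A\to\alpha$: $p(A\beta,u,\varepsilon)\leftarrow m(A\to\alpha)\wedge p(\alpha,u,\varepsilon)$; and $p(A\beta,u,w)\leftarrow m(A\to\alpha)\wedge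 p(\alpha,u,v)\wedge p(\beta,v,w)$ whenever $v\neq\varepsilon$. A $p$- or $q$-atom is provable if it lies in the least Herbrand model of these clauses with all $m$-atoms taken as true. (These clauses describe a top-down prefix parser which succeeds as soon as the input is consumed.) The defined goals of $\mathrm{Expl}(G_\ell)$ form the smallest set containing $q(\ell)$ and such that whenever $H$ is a defined goal and $H\leftarrow\alpha$ is one of the clauses above whose $p$-atoms are all provable, every $p$-atom of $\alpha$ is a defined goal. The defining formula of a defined goal $H$ is $H\Leftrightarrow\alpha_1\vee\dots\vee\alpha_M$, where $\alpha_1,\dots,\alpha_M$ are the bodies of all such clauses with head $H$ whose $p$-atoms are all provable. $H$ is a parent of $C$ if the defined goal $C$ occurs in some $\alpha_i$; the ancestor relation is the transitive closure of the parent relation; $\mathrm{Expl}(G_\ell)$ is cyclic if some defined goal is its own ancestor. *)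

(* Defs.v *)
From Stdlib Require Import List Relations.
From Stdlib Require Import FinFun.
Import ListNotations.
Set Implicit Arguments.

Section Grammar.
Variables (T NT : Type).

Definition symbol := (NT + T)%type.

Record grammar := Grammar {
  rules : list (NT * list symbol);
  start : NT }.

Variable G : grammar.

Definition step (x y : list symbol) : Prop :=
  exists p q A alpha, In (A, alpha) (rules G) /\
    x = p ++ inl A :: q /\ y = p ++ alpha ++ q.

Definition derives := clos_refl_trans (list symbol) step.

Definition terminals (w : list T) : list symbol := map (@inr NT T) w.

Definition no_eps_rules : Prop :=
  forall A alpha, In (A, alpha) (rules G) -> alpha <> [].

Definition useful_rule (A : NT) (alpha : list symbol) : Prop :=
  exists p q w,
    derives [inl (start G)] (p ++ inl A :: q) /\
    derives (p ++ alpha ++ q) (terminals w).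

Definition useless_rule A alpha := ~ useful_rule A alpha.

Definition useless_nonterminal (A : NT) : Prop :=
  forall alpha, In (A, alpha) (rules G) -> useless_rule A alpha.

Definition no_useless_nonterminal : Prop :=
  forall A, ~ useless_nonterminal A.

Definition direct_lc (X Y : NT) : Prop :=
  exists beta, In (X, inl Y :: beta) (rules G).

Definition left_corner := clos_trans NT direct_lc.

Definition lc_cyclic : Prop := exists X, left_corner X X.

Definition is_prefix (l : list T) : Prop :=
  l <> [] /\ exists w', derives [inl (start G)] (terminals (l ++ w')).

(* ground atoms: q(l) and p(beta,u,v) *)
Definition patom := (list symbol * list T * list T)%type.

Inductive goal :=
| GQ : list T -> goal
| GP : patom -> goal.

(* ground clauses: [clause H body] with body the list of p-atoms of the body
   (switch atoms m(A->alpha) are omitted, they are taken to be true) *)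
Inductive clause : goal -> list patom -> Prop :=
| C0 : forall l, clause (GQ l) [([inl (start G)], l, [])]
| C1 : forall u, clause (GP ([], u, u)) []
| C2a : forall a beta, clause (GP (inr a :: beta, [a], [])) []
| C2b : forall a beta v w, v <> [] ->
    clause (GP (inr a :: beta, a :: v, w)) [(beta, v, w)]
| C3a : forall A alpha beta u, In (A, alpha) (rules G) ->
    clause (GP (inl A :: beta, u, [])) [(alpha, u, [])]
| C3b : forall A alpha beta u v w, In (A, alpha) (rules G) -> v <> [] ->
    clause (GP (inl A :: beta, u, w)) [(alpha, u, v); (beta, v, w)].

Inductive provable : goal -> Prop :=
| prov_intro : forall H body, clause H body ->
    (forall x, In x body -> provable (GP x)) -> provable H.

Definition usable_clause (H : goal) (body : list patom) : Prop :=
  clause H body /\ forall x, In x body -> provable (GP x).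

Inductive defined_goal (l : list T) : goal -> Prop :=
| def_root : defined_goal l (GQ l)
| def_step : forall H body x, defined_goal l H -> usable_clause H body ->
    In x body -> defined_goal l (GP x).

Definition parent (l : list T) (H C : goal) : Prop :=
  defined_goal l H /\ defined_goal l C /\
  exists body x, usable_clause H body /\ In x body /\ C = GP x.

Definition ancestor (l : list T) := clos_trans goal (parent l).

Definition expl_cyclic (l : list T) : Prop :=
  exists C, defined_goal l C /\ ancestor l C C.

End Grammar.

(* Main.v *)
Require Import Defs.
From Stdlib Require Import List Relations FinFun Classical.
Import ListNotations.
Set Implicit Arguments.

Inductive D {T NT} (G : grammar T NT) : list (symbol T NT) -> list T -> Prop :=
| Dnil : D G [] []
| Dt : forall a g x, D G g x -> D G (inr a :: g) (a :: x)
| Dn : forall A al g y x, In (A,al) (rules G) -> D G al y -> D G g x ->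
    D G (inl A :: g) (y ++ x).

Lemma D_app_inv {T NT} (G : grammar T NT) g1 : forall g2 x, D G (g1 ++ g2) x ->
  exists x1 x2, x = x1 ++ x2 /\ D G g1 x1 /\ D G g2 x2.
Proof.
  induction g1 as [|s g1 IH]; intros g2 x H.
  - exists [], x; simpl; repeat split; auto. constructor.
  - simpl in H; inversion H; subst.
    + destruct (IH _ _ H3) as (x1 & x2 & -> & Ha & Hb).
      exists (a :: x1), x2; repeat split; auto. constructor; auto.
    + destruct (IH _ _ H5) as (x1 & x2 & -> & Ha & Hb).
      exists (y ++ x1), x2; repeat split; auto. apply app_assoc.
      econstructor; eauto.
Qed.

Lemma D_app {T NT} (G : grammar T NT) g1 x1 g2 x2 :
  D G g1 x1 -> D G g2 x2 -> D G (g1 ++ g2) (x1 ++ x2).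
Proof.
  induction 1; intros; simpl; auto.
  - constructor; auto.
  - rewrite <- app_assoc. econstructor; eauto.
Qed.

Lemma D_term {T NT} (G : grammar T NT) x : D G (terminals NT x) x.
Proof. induction x; simpl; constructor; auto. Qed.

Lemma D_step {T NT} (G : grammar T NT) g g1 x :
  step G g g1 -> D G g1 x -> D G g x.
Proof.
  intros (p & q & A & al & Hin & -> & ->) H.
  destruct (D_app_inv _ _ H) as (x1 & x2 & -> & Ha & Hb).
  destruct (D_app_inv _ _ Hb) as (y1 & y2 & -> & Hc & Hd).
  apply D_app; auto. econstructor; eauto.
Qed.

Lemma derives_D {T NT} (G : grammar T NT) g x :
  derives G g (terminals NT x) -> D G g x.
Proof.
  intro H. apply clos_rt_rt1n in H.
  remember (terminals NT x) as z. induction H; subst.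
  - apply D_term.
  - eapply D_step; eauto.
Qed.

Lemma D_nonempty {T NT} (G : grammar T NT) g y :
  no_eps_rules G -> D G g y -> g <> [] -> y <> [].
Proof.
  intros Hne H. induction H; intros Hg.
  - congruence.
  - discriminate.
  - assert (y <> []) by (apply IHD1; eapply Hne; eauto).
    destruct y; [congruence| discriminate].
Qed.

Inductive LC {T NT} (G : grammar T NT) : symbol T NT -> T -> Prop :=
| LCt : forall t, LC G (inr t) t
| LCn : forall A a al t, In (A, a :: al) (rules G) -> LC G a t -> LC G (inl A) t.

Lemma D_LC {T NT} (G : grammar T NT) g y :
  no_eps_rules G -> D G g y -> forall a g' t z, g = a :: g' -> y = t :: z -> LC G a t.
Proof.
  intros Hne H. induction H; intros a0 g' t z Hg Hy.
  - discriminate.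
  - injection Hg; injection Hy; intros; subst. constructor.
  - injection Hg; intros; subst.
    destruct al as [|a1 al1]; [exfalso; eapply Hne; eauto|].
    destruct y as [|t1 y1].
    { exfalso. refine (D_nonempty Hne H0 _ eq_refl). discriminate. }
    simpl in Hy; injection Hy; intros; subst.
    econstructor; eauto.
Qed.

Inductive Path {T NT} (G : grammar T NT) (X : NT) : list (symbol T NT) -> list T -> Prop :=
| Pt : forall a g x, Path G X g x -> Path G X (inr a :: g) (a :: x)
| Ps : forall A al g y x, In (A,al) (rules G) -> D G al y -> Path G X g x ->
    Path G X (inl A :: g) (y ++ x)
| Pf : forall g, Path G X (inl X :: g) []
| Pd : forall A al g x, In (A,al) (rules G) -> Path G X al x -> Path G X (inl A :: g) x.

Lemma Path_app_inv {T NT} (G : grammar T NT) X g1 : forall g2 x, Path G X (g1 ++ g2) x ->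
  Path G X g1 x \/ exists x1 x2, x = x1 ++ x2 /\ D G g1 x1 /\ Path G X g2 x2.
Proof.
  induction g1 as [|s g1 IH]; intros g2 x H.
  - right. exists [], x; repeat split; auto. constructor.
  - simpl in H; inversion H; subst.
    + destruct (IH _ _ H3) as [H1 | (x1 & x2 & -> & Ha & Hb)].
      * left; constructor; auto.
      * right; exists (a :: x1), x2; repeat split; auto. constructor; auto.
    + destruct (IH _ _ H5) as [H1 | (x1 & x2 & -> & Ha & Hb)].
      * left; econstructor; eauto.
      * right; exists (y ++ x1), x2; repeat split; auto. apply app_assoc.
        econstructor; eauto.
    + left; constructor.
    + left; eapply Pd; eauto.
Qed.

Lemma Path_app_l {T NT} (G : grammar T NT) X g1 x g2 :
  Path G X g1 x -> Path G X (g1 ++ g2) x.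
Proof.
  induction 1; simpl.
  - constructor; auto.
  - econstructor; eauto.
  - constructor.
  - eapply Pd; eauto.
Qed.

Lemma Path_app_r {T NT} (G : grammar T NT) X g1 x1 g2 x2 :
  D G g1 x1 -> Path G X g2 x2 -> Path G X (g1 ++ g2) (x1 ++ x2).
Proof.
  induction 1; intros; simpl; auto.
  - constructor; auto.
  - rewrite <- app_assoc. econstructor; eauto.
Qed.

Lemma Path_step {T NT} (G : grammar T NT) X g g1 x :
  step G g g1 -> Path G X g1 x -> Path G X g x.
Proof.
  intros (p & q & A & al & Hin & -> & ->) H.
  destruct (Path_app_inv _ _ H) as [H1 | (x1 & x2 & -> & Ha & Hb)].
  - apply Path_app_l; auto.
  - apply Path_app_r; auto.
    destruct (Path_app_inv _ _ Hb) as [H3 | (y1 & y2 & -> & Hc & Hd)].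
    + eapply Pd; eauto.
    + econstructor; eauto.
Qed.

Lemma derives_Path {T NT} (G : grammar T NT) X g p q wp :
  derives G g (p ++ inl X :: q) -> D G p wp -> Path G X g wp.
Proof.
  intros H Hp. apply clos_rt_rt1n in H.
  remember (p ++ inl X :: q) as z. induction H; subst.
  - rewrite <- (app_nil_r wp). apply Path_app_r; auto. constructor.
  - eapply Path_step; eauto.
Qed.
From Stdlib Require Import Lia.

Lemma prov_D {T NT} (G : grammar T NT) al y :
  D G al y -> forall w, w <> [] -> provable G (GP (al, y ++ w, w)).
Proof.
  induction 1; intros w Hw; simpl.
  - eapply prov_intro. apply C1. intros x [].
  - eapply prov_intro. apply C2b. destruct x; [exact Hw| discriminate].
    intros z [<-|[]]. auto.
  - rewrite <- app_assoc. eapply prov_intro.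
    apply (@C3b _ _ G A al g (y ++ x ++ w) (x ++ w) w H).
    destruct x; [exact Hw| discriminate].
    intros z [<-|[<-|[]]].
    + apply IHD1. destruct x; [exact Hw|discriminate].
    + apply IHD2; auto.
Qed.

Lemma prov_LC {T NT} (G : grammar T NT) a t :
  LC G a t -> forall g, provable G (GP (a :: g, [t], [])).
Proof.
  induction 1; intros g.
  - eapply prov_intro. apply C2a. intros x [].
  - eapply prov_intro. apply (C3a G A (a :: al) g [t] H).
    intros z [<-|[]]. auto.
Qed.

Lemma prov_Path {T NT} (G : grammar T NT) X t g x :
  Path G X g x -> LC G (inl X) t -> provable G (GP (g, x ++ [t], [])).
Proof.
  induction 1; intros HL; simpl.
  - eapply prov_intro. apply C2b. destruct x; discriminate.
    intros z [<-|[]]. auto.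
  - rewrite <- app_assoc. eapply prov_intro.
    apply (@C3b _ _ G A al g (y ++ x ++ [t]) (x ++ [t]) [] H).
    destruct x; discriminate.
    intros z [<-|[<-|[]]]; auto. apply prov_D; auto. destruct x; discriminate.
  - apply prov_LC; auto.
  - eapply prov_intro. apply (C3a G A al g (x ++ [t]) H).
    intros z [<-|[]]. auto.
Qed.

Lemma reach {T NT} (G : grammar T NT) X t l g x :
  Path G X g x -> LC G (inl X) t -> defined_goal G l (GP (g, x ++ [t], [])) ->
  exists s, defined_goal G l (GP (inl X :: s, [t], [])).
Proof.
  induction 1; intros HL Hd; simpl in Hd.
  - apply IHPath; auto.
    assert (Hu : usable_clause G (GP (inr a :: g, a :: x ++ [t], [])) [(g, x ++ [t], [])]).
    { split. apply C2b. destruct x; discriminate.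
      intros z [<-|[]]. eapply prov_Path; eauto. }
    exact (def_step _ Hd Hu (or_introl eq_refl)).
  - apply IHPath; auto. rewrite <- app_assoc in Hd.
    assert (Hu : usable_clause G (GP (inl A :: g, y ++ x ++ [t], []))
       [(al, y ++ x ++ [t], x ++ [t]); (g, x ++ [t], [])]).
    { split. apply (@C3b _ _ G A al g (y ++ x ++ [t]) (x ++ [t]) [] H). destruct x; discriminate.
      intros z [<-|[<-|[]]]. apply prov_D; auto. destruct x; discriminate.
      eapply prov_Path; eauto. }
    exact (def_step _ Hd Hu (or_intror (or_introl eq_refl))).
  - eauto.
  - apply IHPath; auto.
    assert (Hu : usable_clause G (GP (inl A :: g, x ++ [t], [])) [(al, x ++ [t], [])]).
    { split. apply (C3a G A al g (x ++ [t]) H).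
      intros z [<-|[]]. eapply prov_Path; eauto. }
    exact (def_step _ Hd Hu (or_introl eq_refl)).
Qed.

Lemma lc_LC {T NT} (G : grammar T NT) A B t :
  left_corner G A B -> LC G (inl B) t -> LC G (inl A) t.
Proof.
  induction 1; intros HL; auto.
  destruct H as [be Hr]. econstructor; eauto.
Qed.

Lemma anc_def {T NT} (G : grammar T NT) l H C :
  ancestor G l H C -> defined_goal G l C.
Proof. induction 1 as [? ? Hp|]; auto. destruct Hp as (_ & ? & _); auto. Qed.

Lemma anc_GP {T NT} (G : grammar T NT) l H C :
  ancestor G l H C -> exists x, C = GP x.
Proof. induction 1 as [? ? Hp|]; auto. destruct Hp as (_ & _ & bb & xx & _ & _ & ->); eauto. Qed.

Lemma lc_anc {T NT} (G : grammar T NT) l t A B :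
  left_corner G A B -> LC G (inl B) t -> exists s', forall s0,
    defined_goal G l (GP (inl A :: s0, [t], [])) ->
    ancestor G l (GP (inl A :: s0, [t], [])) (GP (inl B :: s', [t], [])).
Proof.
  induction 1; intros HL.
  - destruct H as [be Hr]. exists be. intros s0 Hd.
    assert (Hu : usable_clause G (GP (inl x :: s0, [t], [])) [(inl y :: be, [t], [])]).
    { split. apply (C3a G x (inl y :: be) s0 [t] Hr).
      intros z [<-|[]]. apply prov_LC; auto. }
    apply t_step. split; [exact Hd|]. split.
    + exact (def_step _ Hd Hu (or_introl eq_refl)).
    + exists [(inl y :: be, [t], [])], (inl y :: be, [t], []).
      split; [exact Hu|]. split; auto. left; auto.
  - assert (HLy : LC G (inl y) t) by (eapply lc_LC; eauto).
    destruct (IHclos_trans1 HLy) as [s1 H1].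
    destruct (IHclos_trans2 HL) as [s2 H2].
    exists s2. intros s0 Hd.
    assert (A1 := H1 s0 Hd).
    eapply t_trans; [exact A1|]. apply H2. eapply anc_def; eauto.
Qed.

Definition inv {T NT} (g : goal T NT) : Prop :=
  match g with
  | GP (b, u, w) => length w <= length u /\ (b <> [] -> w <> [] -> length w < length u)
  | GQ _ _ => True
  end.

Lemma prov_inv {T NT} (G : grammar T NT) g :
  no_eps_rules G -> provable G g -> inv g.
Proof.
  intros Hne H. induction H as [H body Hc Hp IH].
  destruct Hc; simpl; auto.
  - split; auto. intros Hx; congruence.
  - assert (I := IH _ (or_introl eq_refl)). simpl in I.
    destruct I as [I1 _]. split; intros; lia.
  - split; [lia|]. intros _ Hx; congruence.
  - assert (I1 := IH _ (or_introl eq_refl)).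
    assert (I2 := IH _ (or_intror (or_introl eq_refl))). simpl in I1, I2.
    assert (length v < length u).
    { apply I1; auto. eapply Hne; eauto. }
    destruct I2 as [I2 _]. split; intros; lia.
Qed.

Lemma parent_step {T NT} (G : grammar T NT) l b u w b' u' w' :
  no_eps_rules G -> parent G l (GP (b, u, w)) (GP (b', u', w')) ->
  length u' < length u \/
  (length u' = length u /\ exists A be al, b = inl A :: be /\ In (A, al) (rules G) /\ b' = al).
Proof.
  intros Hne (_ & _ & body & x & [Hc Hp] & Hin & Heq).
  injection Heq; intros; subst x.
  inversion Hc; subst; simpl in Hin.
  - destruct Hin.
  - destruct Hin.
  - destruct Hin as [Hx|[]]. injection Hx; intros; subst. left; simpl; lia.
  - destruct Hin as [Hx|[]]. injection Hx; intros; subst. right; split; eauto 10.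
  - destruct Hin as [Hx|[Hx|[]]].
    + injection Hx; intros; subst. right; split; eauto 10.
    + injection Hx; intros; subst. left.
      assert (I := prov_inv Hne (Hp _ (or_introl eq_refl))). simpl in I.
      apply I; auto. eapply Hne; eauto.
Qed.

Lemma anc_lc {T NT} (G : grammar T NT) l H C :
  no_eps_rules G -> clos_trans_1n _ (parent G l) H C ->
  forall b u w b' u' w', H = GP (b, u, w) -> C = GP (b', u', w') ->
  length u' < length u \/
  (length u' = length u /\ exists A be, b = inl A :: be /\
     forall B be', b' = inl B :: be' -> left_corner G A B).
Proof.
  intros Hne Hc. induction Hc as [H C Hp | H Y C Hp Hc IH];
    intros b u w b' u' w' -> ->.
  - destruct (parent_step Hne Hp) as [Hl | (Heq & A & be & al & -> & Hr & ->)]; auto.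
    right; split; auto. exists A, be; split; auto.
    intros B be' ->. apply t_step. exists be'; auto.
  - assert (HY : exists x, Y = GP x) by (destruct Hp as (_ & _ & _ & x & _ & _ & ->); eauto).
    destruct HY as [[[b1 u1] w1] ->].
    destruct (IH b1 u1 w1 b' u' w' eq_refl eq_refl) as [Hl2 | (Heq2 & A1 & be1 & Hb1 & HB)];
    destruct (parent_step Hne Hp) as [Hl | (Heq & A & be & al & -> & Hr & Hal)].
    + left; lia.
    + left; lia.
    + left; lia.
    + right; split; [lia|]. exists A, be; split; auto.
      intros B be' Hb'. subst b1 al.
      apply t_trans with A1. apply t_step. exists be1; auto.
      eapply HB; eauto.
Qed.

Theorem theorem2 (T NT : Type) (HT : Finite T) (HNT : Finite NT)
    (G : grammar T NT) :
  no_eps_rules G -> no_useless_nonterminal G ->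
  ((exists l, is_prefix G l /\ expl_cyclic G l) <-> lc_cyclic G).
Proof.
  intros Hne Hnu. split.
  - intros (l & _ & C & _ & Hanc).
    destruct (anc_GP Hanc) as [[[b u] w] ->].
    apply clos_trans_t1n in Hanc.
    destruct (anc_lc Hne Hanc eq_refl eq_refl) as [Hl | (_ & A & be & Hb & HB)].
    + lia.
    + exists A. eapply HB; eauto.
  - intros [X HX].
    destruct (classic (exists al, In (X, al) (rules G) /\ useful_rule G X al))
      as [[al [Hin Hu]] | Hn].
    2:{ exfalso. apply (Hnu X). intros al Hin Hu. apply Hn; eauto. }
    destruct Hu as (p & q & w & Hd1 & Hd2).
    pose proof (derives_D _ Hd2) as HD.
    destruct (D_app_inv _ _ HD) as (wp & w2 & -> & Hp & H2).
    destruct (D_app_inv _ _ H2) as (wa & wq & -> & Ha & Hq).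
    destruct al as [|a0 al']; [exfalso; eapply Hne; eauto|].
    destruct wa as [|t z].
    { exfalso. refine (D_nonempty Hne Ha _ eq_refl). discriminate. }
    assert (HLa : LC G a0 t) by exact (D_LC Hne Ha eq_refl eq_refl).
    assert (HLX : LC G (inl X) t) by (econstructor; eauto).
    assert (HP : Path G X [inl (start G)] wp) by (eapply derives_Path; eauto).
    exists (wp ++ [t]). split.
    + split. destruct wp; discriminate.
      exists (z ++ wq).
      eapply rt_trans; [exact Hd1|].
      eapply rt_trans. apply rt_step. exists p, q, X, (a0 :: al'). split; eauto.
      rewrite <- app_assoc. simpl. exact Hd2.
    + assert (Hu : usable_clause G (GQ NT (wp ++ [t])) [([inl (start G)], wp ++ [t], [])]).
      { split. apply C0. intros x [<-|[]]. eapply prov_Path; eauto. }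
      assert (Hd := def_step _ (def_root G (wp ++ [t])) Hu (or_introl eq_refl)).
      destruct (reach HP HLX Hd) as [s0 Hs0].
      destruct (lc_anc (wp ++ [t]) HX HLX) as [s' Hs'].
      assert (A1 := Hs' s0 Hs0).
      exists (GP (inl X :: s', [t], [])). split.
      * eapply anc_def; eauto.
      * apply Hs'. eapply anc_def; eauto.
Qed.
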